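(* Let $M$ be a positive integer, $a=1/M$, and $N\ge 1$ a fixed interaction range. For a $2M$-periodic displacement $u=(u_\ell)_{\ell\in\mathbb{Z}}$ define the linearized continuum energy $$E^{c,lin}(u)=\sum_{\ell=-M+1}^{M}\sum_{\substack{k=-N\\k\neq 0}}^{N}\frac{a}{2}\Big(\frac{k^2}{2}(u'_\ell)^2\phi_{xx}(k)\Big)$$ and the linearized atomistic energy $$E^{a,lin}(u)=\sum_{\ell=-M+1}^{M}\sum_{\substack{k=-N\\k\neq 0}}^{N}\frac{a}{2}\Big(\frac12\Big(\frac{u_{\ell+k}-u_\ell}{a}\Big)^2\phi_{xx}(k)\Big),$$ where the deformed configuration is $y_\ell=x_\ell+u_\ell$ with $x_\ell=a\ell$. Then the consistency error between the linearized continuum energy and the linearized atomistic energy is $O(a^2)$, i.e. $E^{c,lin}(u)-E^{a,lin}(u)=O(a^2)$.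
   Context: $\phi:\mathbb{R}\to\mathbb{R}$ is a Lennard-Jones type pair potential with $\phi(r)=\phi(|r|)$, at least four times differentiable, $\phi_{xx}(1)>0$ and $\phi_{xx}(k)\le 0$ for $k\ge 2$; $\phi_{xx}$ denotes its second derivative. Displacements are $2M$-periodic: $u_{\ell+2M}=u_\ell$. The discrete derivative is $u'_\ell=(u_{\ell+1}-u_\ell)/a$. The $O(a^2)$ is understood as $a\to 0$ with $u$ given as the lattice values $u_\ell=\widetilde u(a\ell)$ of its smooth periodic interpolant $\widetilde u$ (the paper uses the periodic quintic spline interpolant, $C^4$ across nodes), the implied constant depending on $N$, $\phi$ and derivatives of $\widetilde u$. *)

(* Defs.v *)
From Stdlib Require Import Reals Lra Lia ZArith List.
From Coquelicot Require Import Coquelicot.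
Open Scope R_scope.

(* zsum lo hi f = sum_{l = lo}^{hi} f l  (empty if hi < lo) *)
Definition zsum (lo hi : Z) (f : Z -> R) : R :=
  fold_right Rplus 0
    (map (fun i => f (lo + Z.of_nat i)%Z) (seq 0 (Z.to_nat (hi - lo + 1)))).

Definition phi_xx (phi : R -> R) : R -> R := Derive_n phi 2.

Definition dprime (a : R) (u : Z -> R) (l : Z) : R := (u (l + 1)%Z - u l) / a.

Definition E_c_lin (phi : R -> R) (N M : nat) (u : Z -> R) : R :=
  let a := / INR M in
  zsum (- Z.of_nat M + 1) (Z.of_nat M) (fun l =>
    zsum (- Z.of_nat N) (Z.of_nat N) (fun k =>
      if Z.eqb k 0 then 0 else
      a / 2 * ((IZR k) ^ 2 / 2 * (dprime a u l) ^ 2 * phi_xx phi (IZR k)))).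

Definition E_a_lin (phi : R -> R) (N M : nat) (u : Z -> R) : R :=
  let a := / INR M in
  zsum (- Z.of_nat M + 1) (Z.of_nat M) (fun l =>
    zsum (- Z.of_nat N) (Z.of_nat N) (fun k =>
      if Z.eqb k 0 then 0 else
      a / 2 * (1 / 2 * ((u (l + k)%Z - u l) / a) ^ 2 * phi_xx phi (IZR k)))).

(* Main.v *)
Require Import Defs.
From Stdlib Require Import Reals ZArith.
From Coquelicot Require Import Coquelicot.
From Stdlib Require Import Lra Lia List.
Open Scope R_scope.


Definition sN (n : nat) (g : nat -> R) : R := fold_right Rplus 0 (map g (seq 0 n)).

Lemma fr_init l c : fold_right Rplus c l = fold_right Rplus 0 l + c.
Proof. induction l; simpl; [ring | rewrite IHl; ring]. Qed.

Lemma sN_0 g : sN 0 g = 0. Proof. reflexivity. Qed.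
Lemma sN_S n g : sN (S n) g = sN n g + g n.
Proof. unfold sN. rewrite seq_S, map_app, fold_right_app. simpl. rewrite fr_init. ring. Qed.

Lemma sN_ext n g h : (forall i, (i < n)%nat -> g i = h i) -> sN n g = sN n h.
Proof. induction n; intro H; [reflexivity|]. rewrite !sN_S. rewrite IHn by (intros; apply H; lia).
  rewrite H by lia. reflexivity. Qed.
Lemma sN_plus n g h : sN n (fun i => g i + h i) = sN n g + sN n h.
Proof. induction n; [unfold sN; simpl; ring|]. rewrite !sN_S, IHn; ring. Qed.
Lemma sN_minus n g h : sN n (fun i => g i - h i) = sN n g - sN n h.
Proof. induction n; [unfold sN; simpl; ring|]. rewrite !sN_S, IHn; ring. Qed.
Lemma sN_scal n c g : sN n (fun i => c * g i) = c * sN n g.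
Proof. induction n; [unfold sN; simpl; ring|]. rewrite !sN_S, IHn; ring. Qed.
Lemma sN_const n c : sN n (fun _ => c) = INR n * c.
Proof. induction n; [unfold sN; simpl; ring|]. rewrite !sN_S, IHn, S_INR; ring. Qed.
Lemma sN_le n g h : (forall i, (i < n)%nat -> g i <= h i) -> sN n g <= sN n h.
Proof. induction n; intro H; [unfold sN; simpl; lra|]. rewrite !sN_S. apply Rplus_le_compat; [apply IHn; intros; apply H; lia| apply H; lia]. Qed.
Lemma sN_abs n g : Rabs (sN n g) <= sN n (fun i => Rabs (g i)).
Proof. induction n; [unfold sN; simpl; rewrite Rabs_R0; lra|]. rewrite !sN_S. eapply Rle_trans; [apply Rabs_triang|]. lra. Qed.
Lemma sN_swap n m g : sN n (fun i => sN m (fun j => g i j)) = sN m (fun j => sN n (fun i => g i j)).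
Proof. induction n; [rewrite sN_0; transitivity (sN m (fun _ => 0)); [rewrite sN_const; ring | apply sN_ext; reflexivity]|]. rewrite sN_S, IHn.
  rewrite <- sN_plus. apply sN_ext. intros. rewrite sN_S. reflexivity. Qed.
Lemma sN_shift1 n g : sN n (fun i => g (S i)) = sN n g - g 0%nat + g n.
Proof. induction n; [unfold sN; simpl; ring|]. rewrite !sN_S, IHn. ring. Qed.

Section Per.
Variable P : nat.
Variable lo : Z.
Definition SP (f : Z -> R) := sN P (fun i => f (lo + Z.of_nat i)%Z).

Lemma SP_shift f : (forall l, f (l + Z.of_nat P)%Z = f l) ->
  forall s : nat, SP (fun l => f (l + Z.of_nat s)%Z) = SP f.
Proof.
  intros Hf s. induction s.
  - unfold SP. apply sN_ext. intros. f_equal. lia.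
  - rewrite <- IHs. unfold SP.
    transitivity (sN P (fun i => (fun j => f (lo + Z.of_nat j + Z.of_nat s)%Z) (S i))).
    { apply sN_ext. intros. f_equal. lia. }
    rewrite (sN_shift1 P (fun j => f (lo + Z.of_nat j + Z.of_nat s)%Z)). rewrite <- (Hf (lo + Z.of_nat 0 + Z.of_nat s)%Z).
    replace (lo + Z.of_nat 0 + Z.of_nat s + Z.of_nat P)%Z with (lo + Z.of_nat P + Z.of_nat s)%Z by lia.
    ring.
Qed.
End Per.

Lemma alg_var K (x : nat -> R) c :
  INR K * sN K (fun j => x j ^ 2) - (sN K x) ^ 2 =
  INR K * sN K (fun j => (x j - c) ^ 2) - (sN K (fun j => x j - c)) ^ 2.
Proof.
  assert (E : sN K (fun j => (x j - c) ^ 2) = sN K (fun j => x j ^ 2) + (-2 * c) * sN K x + INR K * c ^ 2).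
  { transitivity (sN K (fun j => (x j ^ 2 + (-2 * c) * x j) + c ^ 2)); [apply sN_ext; intros; ring|].
    rewrite sN_plus, sN_plus, sN_scal, sN_const. ring. }
  rewrite E, sN_minus, sN_const. ring.
Qed.

Lemma var_bound K (e : nat -> R) b : 0 <= b ->
  (forall j, (j < K)%nat -> Rabs (e j) <= b) ->
  Rabs (INR K * sN K (fun j => e j ^ 2) - (sN K e) ^ 2) <= 2 * (INR K) ^ 2 * b ^ 2.
Proof.
  intros hb H.
  assert (HK : 0 <= INR K) by apply pos_INR.
  assert (A1 : 0 <= sN K (fun j => e j ^ 2)).
  { rewrite <- (Rmult_0_r (INR K)), <- sN_const. apply sN_le. intros; nra. }
  assert (A2 : sN K (fun j => e j ^ 2) <= INR K * b ^ 2).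
  { rewrite <- sN_const. apply sN_le. intros i Hi. specialize (H i Hi).
    rewrite <- (pow2_abs (e i)). pose proof (Rabs_pos (e i)). nra. }
  assert (A3 : Rabs (sN K e) <= INR K * b).
  { eapply Rle_trans; [apply sN_abs|]. rewrite <- sN_const. apply sN_le. auto. }
  assert (A4 : (sN K e) ^ 2 <= (INR K * b) ^ 2).
  { rewrite <- (pow2_abs (sN K e)). pose proof (Rabs_pos (sN K e)). nra. }
  assert (A5 : 0 <= (sN K e) ^ 2) by nra.
  apply Rabs_le. split; nra.
Qed.

Section Key.
Variable u : Z -> R.
Variable P : nat.
Variable lo : Z.
Hypothesis Hper : forall l, u (l + Z.of_nat P)%Z = u l.
Variable eps : R.
Hypothesis Heps0 : 0 <= eps.
Hypothesis Heps : forall m, Rabs (u (m + 2)%Z - 2 * u (m + 1)%Z + u m) <= eps.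

Definition dd l := u (l + 1)%Z - u l.

Lemma telesc K l : u (l + Z.of_nat K)%Z - u l = sN K (fun j => dd (l + Z.of_nat j)%Z).
Proof.
  induction K.
  - simpl. rewrite Z.add_0_r. unfold sN; simpl; ring.
  - rewrite sN_S, <- IHK. unfold dd.
    replace (l + Z.of_nat (S K))%Z with (l + Z.of_nat K + 1)%Z by lia. ring.
Qed.

Lemma dd_per l : dd (l + Z.of_nat P)%Z = dd l.
Proof. unfold dd. replace (l + Z.of_nat P + 1)%Z with (l + 1 + Z.of_nat P)%Z by lia. rewrite !Hper. reflexivity. Qed.

Lemma dd_diff l j : Rabs (dd (l + Z.of_nat j)%Z - dd l) <= INR j * eps.
Proof.
  induction j.
  - simpl. rewrite Z.add_0_r. unfold Rminus. rewrite Rplus_opp_r, Rabs_R0. lra.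
  - rewrite S_INR.
    replace (dd (l + Z.of_nat (S j))%Z - dd l) with
      ((u (l + Z.of_nat j + 2)%Z - 2 * u (l + Z.of_nat j + 1)%Z + u (l + Z.of_nat j)%Z)
       + (dd (l + Z.of_nat j)%Z - dd l)).
    + eapply Rle_trans; [apply Rabs_triang|]. specialize (Heps (l + Z.of_nat j)%Z). lra.
    + unfold dd. replace (l + Z.of_nat (S j) + 1)%Z with (l + Z.of_nat j + 2)%Z by lia.
      replace (l + Z.of_nat (S j))%Z with (l + Z.of_nat j + 1)%Z by lia. ring.
Qed.

Lemma key K :
  Rabs (INR K ^ 2 * SP P lo (fun l => dd l ^ 2) - SP P lo (fun l => (u (l + Z.of_nat K)%Z - u l) ^ 2))
  <= INR P * (2 * INR K ^ 2 * (INR K * eps) ^ 2).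
Proof.
  assert (Hb : SP P lo (fun l => sN K (fun j => dd (l + Z.of_nat j)%Z ^ 2)) = INR K * SP P lo (fun l => dd l ^ 2)).
  { unfold SP. rewrite sN_swap. rewrite <- sN_const. apply sN_ext. intros j _.
    apply (SP_shift P lo (fun l => dd l ^ 2)). intro l. simpl. rewrite dd_per. reflexivity. }
  replace (INR K ^ 2 * SP P lo (fun l => dd l ^ 2)) with (INR K * (INR K * SP P lo (fun l => dd l ^ 2))) by ring.
  rewrite <- Hb. unfold SP. rewrite <- sN_scal, <- sN_minus.
  eapply Rle_trans; [apply sN_abs|]. rewrite <- sN_const. apply sN_le. intros i _.
  rewrite telesc.
  rewrite (alg_var K (fun j => dd (lo + Z.of_nat i + Z.of_nat j)%Z) (dd (lo + Z.of_nat i)%Z)).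
  apply var_bound.
  - pose proof (pos_INR K). nra.
  - intros j Hj. eapply Rle_trans; [apply dd_diff|]. apply Rmult_le_compat_r; auto.
    apply le_INR. lia.
Qed.
End Key.

Section An.
Variable ut : R -> R.
Hypothesis Hd : forall (k : nat) (x : R), (k <= 4)%nat -> ex_derive_n ut k x.

Lemma d1 x : ex_derive ut x.
Proof. exact (Hd 1 x ltac:(lia)). Qed.
Lemma d2 x : ex_derive (Derive ut) x.
Proof. exact (Hd 2 x ltac:(lia)). Qed.
Lemma d3 x : ex_derive (Derive (Derive ut)) x.
Proof. exact (Hd 3 x ltac:(lia)). Qed.

Lemma mvt_bound (f df : R -> R) x h B : 0 <= h ->
  (forall t, x <= t <= x + h -> is_derive f t (df t)) ->
  (forall t, x <= t <= x + h -> Rabs (df t) <= B) ->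
  Rabs (f (x + h) - f x) <= B * h.
Proof.
  intros hh Hder Hb.
  destruct (MVT_gen f x (x+h) df) as [c [Hc Heq]].
  - intros t Ht. apply Hder. rewrite Rmin_left in Ht by lra. rewrite Rmax_right in Ht by lra. lra.
  - intros t Ht. rewrite Rmin_left in Ht by lra. rewrite Rmax_right in Ht by lra.
    apply continuity_pt_filterlim. apply (ex_derive_continuous f t). eexists. apply Hder. lra.
  - rewrite Rmin_left in Hc by lra. rewrite Rmax_right in Hc by lra.
    rewrite Heq. replace (x + h - x) with h by ring. rewrite Rabs_mult, (Rabs_right h) by lra.
    apply Rmult_le_compat_r; auto.
Qed.

Lemma sd_local B x h : 0 <= h ->
  (forall y, x <= y <= x + 2 * h -> Rabs (Derive (Derive ut) y) <= B) ->
  Rabs (ut (x + 2 * h) - 2 * ut (x + h) + ut x) <= B * h ^ 2.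
Proof.
  intros hh HB.
  set (g := fun t => ut (t + h) - ut t).
  replace (ut (x + 2 * h) - 2 * ut (x + h) + ut x) with (g (x + h) - g x)
    by (unfold g; replace (x + h + h) with (x + 2 * h) by ring; ring).
  replace (B * h ^ 2) with ((B * h) * h) by ring.
  apply mvt_bound with (df := fun t => Derive ut (t + h) - Derive ut t); auto.
  - intros t _. unfold g. apply @is_derive_minus.
    + assert (Hc : is_derive (fun t => t + h) t 1).
      { replace 1 with (1 + 0) by ring. apply @is_derive_plus. apply @is_derive_id. apply @is_derive_const. }
      pose proof (is_derive_comp ut (fun t => t + h) t _ _ (Derive_correct ut (t + h) (d1 _)) Hc) as H.
      unfold scal in H; simpl in H; unfold mult in H; simpl in H.
      rewrite Rmult_1_l in H. exact H.
    + apply Derive_correct, d1.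
  - intros t Ht.
    apply mvt_bound with (df := Derive (Derive ut)); auto.
    + intros s _. apply Derive_correct, d2.
    + intros s Hs. apply HB. lra.
Qed.

Lemma bound2 : exists B, forall y, 0 <= y <= 4 -> Rabs (Derive (Derive ut) y) <= B.
Proof.
  destruct (continuity_ab_maj (fun y => Rabs (Derive (Derive ut) y)) 0 4) as [m [Hm _]].
  - lra.
  - intros c _. apply continuity_pt_filterlim.
    apply (continuous_Rabs_comp (Derive (Derive ut))).
    exact (ex_derive_continuous (Derive (Derive ut)) c (d3 c)).
  - exists (Rabs (Derive (Derive ut) m)). exact Hm.
Qed.

Hypothesis Hper : forall x, ut (x + 2) = ut x.

Lemma perZ : forall q x, ut (x + 2 * IZR q) = ut x.
Proof.
  assert (Hn : forall n x, ut (x + 2 * INR n) = ut x).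
  { induction n; intro x. simpl. f_equal; ring.
    rewrite S_INR. replace (x + 2 * (INR n + 1)) with ((x + 2 * INR n) + 2) by ring.
    rewrite Hper. apply IHn. }
  intros q x. destruct (Z_le_gt_dec 0 q).
  - rewrite <- (Z2Nat.id q) by lia. rewrite <- INR_IZR_INZ. apply Hn.
  - rewrite <- (Hn (Z.to_nat (- q)) (x + 2 * IZR q)). rewrite INR_IZR_INZ, Z2Nat.id by lia.
    f_equal. rewrite opp_IZR. ring.
Qed.

Lemma sd_global : exists B, forall x h, 0 <= h <= 1 ->
  Rabs (ut (x + 2 * h) - 2 * ut (x + h) + ut x) <= B * h ^ 2.
Proof.
  destruct bound2 as [B HB]. exists B. intros x h Hh.
  set (q := (up (x / 2) - 1)%Z).
  destruct (archimed (x / 2)) as [H1 H2].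
  assert (Hq : IZR q = IZR (up (x/2)) - 1) by (unfold q; rewrite minus_IZR; reflexivity).
  set (x0 := x - 2 * IZR q).
  assert (E : forall t, ut (x + t) = ut (x0 + t)).
  { intro t. rewrite <- (perZ q (x0 + t)). f_equal. unfold x0. ring. }
  rewrite (E (2 * h)), (E h). rewrite <- (Rplus_0_r x), E, Rplus_0_r.
  apply sd_local. lra. intros y Hy. apply HB. unfold x0 in Hy. lra.
Qed.
End An.

Lemma zsum_SP lo hi f : zsum lo hi f = SP (Z.to_nat (hi - lo + 1)) lo f.
Proof. reflexivity. Qed.
Lemma zsum_minus lo hi f g : zsum lo hi (fun x => f x - g x) = zsum lo hi f - zsum lo hi g.
Proof. rewrite !zsum_SP. unfold SP. apply sN_minus. Qed.
Lemma zsum_scal lo hi c f : zsum lo hi (fun x => c * f x) = c * zsum lo hi f.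
Proof. rewrite !zsum_SP. unfold SP. apply sN_scal. Qed.
Lemma zsum_ext lo hi f g : (forall x, f x = g x) -> zsum lo hi f = zsum lo hi g.
Proof. intro H. rewrite !zsum_SP. unfold SP. apply sN_ext. auto. Qed.
Lemma zsum_le lo hi f g : (forall x, f x <= g x) -> zsum lo hi f <= zsum lo hi g.
Proof. intro H. rewrite !zsum_SP. unfold SP. apply sN_le. auto. Qed.
Lemma zsum_abs lo hi f : Rabs (zsum lo hi f) <= zsum lo hi (fun x => Rabs (f x)).
Proof. rewrite !zsum_SP. unfold SP. apply sN_abs. Qed.
Lemma zsum_swap lo hi lo' hi' (g : Z -> Z -> R) :
  zsum lo hi (fun l => zsum lo' hi' (fun k => g l k)) = zsum lo' hi' (fun k => zsum lo hi (fun l => g l k)).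
Proof. rewrite !zsum_SP. unfold SP. exact (sN_swap _ _ (fun i j => g (lo + Z.of_nat i)%Z (lo' + Z.of_nat j)%Z)). Qed.

Section Main.
Variable u : Z -> R.
Variable M : nat.
Hypothesis HM : (1 <= M)%nat.
Hypothesis Hper : forall l, u (l + Z.of_nat (2 * M))%Z = u l.
Variable eps : R.
Hypothesis Heps0 : 0 <= eps.
Hypothesis Heps : forall m, Rabs (u (m + 2)%Z - 2 * u (m + 1)%Z + u m) <= eps.

Lemma shift_neg (K : nat) :
  SP (2 * M) (- Z.of_nat M + 1) (fun l => (u (l + - Z.of_nat K)%Z - u l) ^ 2) =
  SP (2 * M) (- Z.of_nat M + 1) (fun l => (u (l + Z.of_nat K)%Z - u l) ^ 2).
Proof.
  set (g := fun l => (u l - u (l - Z.of_nat K)%Z) ^ 2).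
  assert (Hg : forall l, g (l + Z.of_nat (2 * M))%Z = g l).
  { intro l. unfold g. rewrite Hper.
    replace (l + Z.of_nat (2 * M) - Z.of_nat K)%Z with (l - Z.of_nat K + Z.of_nat (2 * M))%Z by lia.
    rewrite Hper. reflexivity. }
  transitivity (SP (2 * M) (- Z.of_nat M + 1) g).
  { unfold SP, g. apply sN_ext. intros i _.
    replace (- Z.of_nat M + 1 + Z.of_nat i + - Z.of_nat K)%Z with (- Z.of_nat M + 1 + Z.of_nat i - Z.of_nat K)%Z by lia.
    ring. }
  rewrite <- (SP_shift _ _ g Hg K).
  unfold SP, g. apply sN_ext. intros i _.
  replace (- Z.of_nat M + 1 + Z.of_nat i + Z.of_nat K - Z.of_nat K)%Z with (- Z.of_nat M + 1 + Z.of_nat i)%Z by lia.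
  reflexivity.
Qed.

Lemma per_k (phi2 : R) (k : Z) :
  Rabs (zsum (- Z.of_nat M + 1) (Z.of_nat M) (fun l =>
      (if Z.eqb k 0 then 0 else
        / INR M / 2 * ((IZR k) ^ 2 / 2 * (dprime (/ INR M) u l) ^ 2 * phi2)) -
      (if Z.eqb k 0 then 0 else
        / INR M / 2 * (1 / 2 * ((u (l + k)%Z - u l) / / INR M) ^ 2 * phi2))))
  <= Rabs phi2 * IZR k ^ 4 * (INR M * eps) ^ 2.
Proof.
  assert (Mpos : 0 < INR M) by (apply lt_0_INR; lia).
  destruct (Z.eqb_spec k 0) as [->|Hk].
  - rewrite (zsum_ext _ _ _ (fun _ => 0 * 0)) by (intros; ring).
    rewrite zsum_scal, Rmult_0_l, Rabs_R0.
    apply Rmult_le_pos; [|nra]. apply Rmult_le_pos; [apply Rabs_pos|]. simpl; lra.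
  - rewrite (zsum_ext _ _ _ (fun l => (phi2 * INR M / 4) *
       (IZR k ^ 2 * dd u l ^ 2 - (u (l + k)%Z - u l) ^ 2))).
    2:{ intro l. unfold dprime, dd. field. lra. }
    rewrite zsum_scal, zsum_minus, zsum_scal.
    rewrite !zsum_SP.
    replace (Z.to_nat (Z.of_nat M - (- Z.of_nat M + 1) + 1)) with (2 * M)%nat by lia.
    set (K := Z.abs_nat k).
    assert (HkK : IZR k ^ 2 = INR K ^ 2).
    { unfold K. rewrite INR_IZR_INZ, Nat2Z.inj_abs_nat, abs_IZR. symmetry. apply pow2_abs. }
    assert (HS : SP (2 * M) (- Z.of_nat M + 1) (fun l => (u (l + k)%Z - u l) ^ 2) =
                 SP (2 * M) (- Z.of_nat M + 1) (fun l => (u (l + Z.of_nat K)%Z - u l) ^ 2)).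
    { destruct (Z_le_gt_dec 0 k).
      - unfold K. rewrite Nat2Z.inj_abs_nat, Z.abs_eq by lia. reflexivity.
      - rewrite <- shift_neg. unfold K. rewrite Nat2Z.inj_abs_nat, Z.abs_neq by lia.
        rewrite Z.opp_involutive. reflexivity. }
    rewrite HS, HkK.
    pose proof (key u (2 * M) (- Z.of_nat M + 1) Hper eps Heps0 Heps K) as Hkey.
    rewrite Rabs_mult.
    replace (IZR k ^ 4) with ((INR K ^ 2) ^ 2) by (rewrite <- HkK; ring).
    rewrite mult_INR in Hkey. simpl (INR 2) in Hkey.
    replace (Rabs (phi2 * INR M / 4)) with (Rabs phi2 * (INR M / 4)).
    2:{ unfold Rdiv. rewrite !Rabs_mult, (Rabs_right (INR M)), (Rabs_right (/ 4)); [ring| |];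
        apply Rle_ge; [apply Rlt_le, Rinv_0_lt_compat|]; lra. }
    pose proof (Rabs_pos phi2).
    apply Rle_trans with (Rabs phi2 * (INR M / 4) * (2 * INR M * (2 * INR K ^ 2 * (INR K * eps) ^ 2))).
    + apply Rmult_le_compat_l; [nra|]. exact Hkey.
    + right. field.
Qed.
End Main.

Theorem proposition1 (phi : R -> R) (N : nat) (ut : R -> R) :
  (forall r, phi r = phi (Rabs r)) ->
  (forall (k : nat) (x : R), (k <= 4)%nat -> x <> 0 -> ex_derive_n phi k x) ->
  phi_xx phi 1 > 0 ->
  (forall k : nat, (2 <= k)%nat -> phi_xx phi (INR k) <= 0) ->
  (1 <= N)%nat ->
  (forall x, ut (x + 2) = ut x) ->
  (forall (k : nat) (x : R), (k <= 4)%nat -> ex_derive_n ut k x) ->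
  (forall x, continuous (Derive_n ut 4) x) ->
  exists C : R, forall M : nat, (1 <= M)%nat ->
    Rabs (E_c_lin phi N M (fun l => ut (IZR l / INR M))
          - E_a_lin phi N M (fun l => ut (IZR l / INR M)))
    <= C * (/ INR M) ^ 2.
Proof.
  intros Hsym Hphi H1 H2 HN Hper Hd Hc.
  destruct (sd_global ut Hd Hper) as [B HB].
  assert (B0 : 0 <= B).
  { specialize (HB 0 1 ltac:(lra)). pose proof (Rabs_pos (ut (0 + 2 * 1) - 2 * ut (0 + 1) + ut 0)). lra. }
  exists (zsum (- Z.of_nat N) (Z.of_nat N) (fun k => Rabs (phi_xx phi (IZR k)) * IZR k ^ 4 * B ^ 2)).
  intros M HM.
  assert (Mpos : 0 < INR M) by (apply lt_0_INR; lia).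
  assert (M1 : 1 <= INR M) by (apply (le_INR 1); lia).
  set (u := fun l => ut (IZR l / INR M)).
  assert (Hperu : forall l, u (l + Z.of_nat (2 * M))%Z = u l).
  { intro l. unfold u. rewrite plus_IZR, <- INR_IZR_INZ, mult_INR.
    replace ((IZR l + INR 2 * INR M) / INR M) with (IZR l / INR M + 2) by (simpl; field; lra).
    apply Hper. }
  assert (Hepsu : forall m, Rabs (u (m + 2)%Z - 2 * u (m + 1)%Z + u m) <= B * (/ INR M) ^ 2).
  { intro m. unfold u. rewrite !plus_IZR.
    replace ((IZR m + 2) / INR M) with (IZR m / INR M + 2 * / INR M) by (field; lra).
    replace ((IZR m + 1) / INR M) with (IZR m / INR M + / INR M) by (field; lra).
    apply HB. split. left; apply Rinv_0_lt_compat; lra.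
    rewrite <- Rinv_1. apply Rinv_le_contravar; lra. }
  assert (eps0 : 0 <= B * (/ INR M) ^ 2).
  { apply Rmult_le_pos; auto. apply pow2_ge_0. }
  unfold E_c_lin, E_a_lin. cbv zeta.
  rewrite <- zsum_minus.
  erewrite zsum_ext; [| intro l; rewrite <- zsum_minus; reflexivity].
  rewrite zsum_swap.
  eapply Rle_trans; [apply zsum_abs|].
  rewrite Rmult_comm, <- zsum_scal. apply zsum_le. intro k.
  eapply Rle_trans; [apply (per_k u M HM Hperu (B * (/ INR M) ^ 2) eps0 Hepsu (phi_xx phi (IZR k)) k)|].
  right. field. lra.
Qed.
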